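(* Let $H \subset L$ be light-cone regular, let $h_0$ be a minimal element of $H$ with respect to $\le$, and let $H' = H \setminus \{h_0\}$. Then the initial boundaries satisfy $H'_0 = (H_0 \setminus \{h_0\}) \cup \{h_0 - v_N\}$.
   Context: Let $L$ be a finitely generated $\mathbb{Z}$-module and $v_1,\dots,v_N\in L$ distinct elements linearly independent over $\mathbb{Z}_{\ge 0}$ (i.e. $\sum_i a_i v_i=0$ with all $a_i\in\mathbb{Z}_{\ge0}$ forces all $a_i=0$). Let $S=\{\sum_i a_iv_i : a_i\in\mathbb{Z}_{\ge0}\}$ and define the partial order $h_1\le h_2$ iff $h_1-h_2\in S$. Assume $v_N$ is the minimum of $\{0,v_1,\dots,v_N\}$ with respect to $\le$. A nonempty subset $H\subset L$ is light-cone regular if for every $h\in H$ the set $\{h'\in H: h'\le h\}$ is finite and $\{h'\in L: h'\ge h\}\subset H$. The initial boundary of a light-cone regular $H$ is $H_0=\{h\in H:\ h+v_i\notin H\text{ for some }i\}$. (For minimal $h_0$, the set $H\setminus\{h_0\}$ is again light-cone regular, so $H'_0$ is defined.) *)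

(* Defs.v *)
From mathcomp Require Import all_boot all_order all_algebra.
Set Implicit Arguments. Unset Strict Implicit. Unset Printing Implicit Defensive.
Import GRing.Theory.
Local Open Scope ring_scope.

Definition fin_gen (L : zmodType) : Prop :=
  exists (n : nat) (g : 'I_n -> L),
    forall x : L, exists c : 'I_n -> int, x = \sum_(i < n) g i *~ c i.

Definition nonneg_indep (L : zmodType) (N : nat) (v : 'I_N -> L) : Prop :=
  forall a : 'I_N -> nat, \sum_(i < N) v i *+ a i = 0 -> forall i, a i = 0%N.

Definition inS (L : zmodType) (N : nat) (v : 'I_N -> L) (x : L) : Prop :=
  exists a : 'I_N -> nat, x = \sum_(i < N) v i *+ a i.

Definition vle (L : zmodType) (N : nat) (v : 'I_N -> L) (h1 h2 : L) : Prop :=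
  inS v (h1 - h2).

Definition finite_pred (L : zmodType) (P : L -> Prop) : Prop :=
  exists s : seq L, forall x, P x -> x \in s.

Definition light_cone_regular (L : zmodType) (N : nat) (v : 'I_N -> L)
    (H : L -> Prop) : Prop :=
  (exists h, H h) /\
  forall h, H h ->
    finite_pred (fun h' => H h' /\ vle v h' h) /\
    (forall h', vle v h h' -> H h').

Definition init_boundary (L : zmodType) (N : nat) (v : 'I_N -> L)
    (H : L -> Prop) : L -> Prop :=
  fun h => H h /\ exists i, ~ H (h + v i).

Definition minimal_in (L : zmodType) (N : nat) (v : 'I_N -> L)
    (H : L -> Prop) (h0 : L) : Prop :=
  H h0 /\ forall h, H h -> vle v h h0 -> h = h0.

(* Main.v *)
Require Import Defs.
From mathcomp Require Import all_boot all_order all_algebra.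
Local Open Scope ring_scope.
Import GRing.Theory.
From Stdlib Require Import Classical.

Lemma sum_ind (L : zmodType) (N : nat) (v : 'I_N -> L) j :
  \sum_(i < N) v i *+ (i == j) = v j.
Proof.
rewrite (bigD1 j) //= eqxx big1 ?addr0 // => i /negbTE ->; by rewrite mulr0n.
Qed.

(* indices 'I_N.+1 = {v_1,...,v_N} with v_N = v ord_max *)
Theorem lemma3p11 (L : zmodType) (N : nat) (v : 'I_N.+1 -> L)
  (Lfg : fin_gen L)
  (v_inj : injective v)
  (v_ind : nonneg_indep v)
  (vN_le0 : vle v (v ord_max) 0)
  (vN_min : forall i, vle v (v ord_max) (v i))
  (H : L -> Prop) (HL : light_cone_regular v H)
  (h0 : L) (h0min : minimal_in v H h0) :
  forall x : L,
    init_boundary v (fun h => H h /\ h <> h0) x <->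
    ((init_boundary v H x /\ x <> h0) \/ x = h0 - v ord_max).
Proof.
move=> x; case: h0min => Hh0 h0m; case: HL => _ HL.
have vN0 : v ord_max <> 0.
  move=> e; have := v_ind (fun i => nat_of_bool (i == ord_max)).
  rewrite sum_ind => /(_ e ord_max); by rewrite eqxx.
split.
- case=> [[Hx xh0] [i Hi]].
  case: (classic (H (x + v i))) => Hxi; last first.
    left; split=> //; split=> //; by exists i.
  have e : x + v i = h0.
    apply: NNPP => ne; by apply: Hi.
  case: (vN_min i) => a ea.
  case: (classic (H (x + v ord_max))) => Hn; last first.
    left; split=> //; split=> //; by exists ord_max.
  have e2 : x + v ord_max = h0.
    apply: h0m => //; exists a; rewrite -ea -e.
    by rewrite opprD addrACA subrr add0r.
  right; by rewrite -e2 addrK.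
- case=> [[[Hx [i Hi]] xh0]|->].
    split=> //; exists i; by case.
  have Hx : H (h0 - v ord_max).
    apply: (proj2 (HL h0 Hh0)); exists (fun i => nat_of_bool (i == ord_max)).
    by rewrite sum_ind opprB addrC addrNK.
  split.
    split=> // e; apply: vN0; apply: oppr_inj; rewrite oppr0.
    by rewrite -(addKr h0 (- v ord_max)) e addNr.
  exists ord_max; rewrite addrNK; by case.
Qed.
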